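(* Let $k\in\mathbb{N}$ with $\gcd(k,6)=3$, let $h$ be an integer with $\gcd(h,k)=1$, and let $h'$ be an integer with $hh'\equiv-1\pmod{k}$ and $2\mid h'$. Then $$\frac{\omega_{2h,\frac{k}{3}}\,\omega_{2h,k}\,\omega_{h,k}}{\omega_{h,\frac{k}{3}}} =-\exp\!\left(- \frac{2\pi i}{36k} \left(-9k+9k^2+ h (-9+5k^2) - 2k^2h' \right)\right)$$ and $$\frac{\omega_{h,\frac{k}{3}}\,\omega_{2h,k}\,\omega_{h,k}}{\omega_{2h,\frac{k}{3}}^3} =-\exp\!\left(- \frac{2\pi i}{18k} \left(3k^2+ h (9+k^2) - k^2h' \right)\right).$$
   Context: For coprime integers $h$ and $K\ge1$, $\omega_{h,K}=\exp(\pi i\, s(h,K))$, where $s(h,K)=\sum_{r=1}^{K-1}\frac{r}{K}\left(\frac{hr}{K}-\lfloor \frac{hr}{K}\rfloor-\frac12\right)$ is the Dedekind sum (the multiplier of the Dedekind eta function). *)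

(* Defs.v *)
From Stdlib Require Import Reals ZArith List.
From Coquelicot Require Import Coquelicot.
Open Scope R_scope.

Definition expi (t : R) : Complex.C := (cos t, sin t).

Definition rfloor (x : R) : R := IZR (Int_part x).

Definition dedekind_s (h K : Z) : R :=
  fold_right Rplus 0
    (map (fun r : nat =>
            let x := IZR h * INR r / IZR K in
            (INR r / IZR K) * (x - rfloor x - 1/2))
         (seq 1 (Z.to_nat K - 1))).

Definition omega (h K : Z) : Complex.C := expi (PI * dedekind_s h K).

(* Main.v *)
Require Import Defs.
From Stdlib Require Import Reals ZArith List.
From Coquelicot Require Import Coquelicot.
From Stdlib Require Import Lia Lra Permutation Znumtheory.
Import ListNotations.
Open Scope Z_scope.

Definition L (n : nat) : list Z := map Z.of_nat (seq 0 n).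
Definition sumZ (f : Z -> Z) (n : nat) : Z := fold_right Z.add 0 (map f (L n)).

Lemma fold_add_init (l : list Z) (a : Z) :
  fold_right Z.add a l = fold_right Z.add 0 l + a.
Proof. induction l; simpl; lia. Qed.

Lemma sumZ_0 f : sumZ f 0 = 0.
Proof. reflexivity. Qed.

Lemma sumZ_S f n : sumZ f (S n) = sumZ f n + f (Z.of_nat n).
Proof.
  unfold sumZ, L. rewrite seq_S, !map_app, fold_right_app. simpl.
  rewrite fold_add_init. lia.
Qed.

Lemma sumZ_ext f g n : (forall i, 0 <= i < Z.of_nat n -> f i = g i) ->
  sumZ f n = sumZ g n.
Proof.
  induction n; intros H; [reflexivity|].
  rewrite !sumZ_S. rewrite IHn by (intros; apply H; lia). rewrite H by lia. lia.
Qed.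

Lemma sumZ_add f g n : sumZ (fun i => f i + g i) n = sumZ f n + sumZ g n.
Proof. induction n; [reflexivity|]. rewrite !sumZ_S, IHn. lia. Qed.

Lemma sumZ_scal c f n : sumZ (fun i => c * f i) n = c * sumZ f n.
Proof. induction n; [rewrite !sumZ_0; lia|]. rewrite !sumZ_S, IHn. lia. Qed.

Lemma sumZ_opp f n : sumZ (fun i => - f i) n = - sumZ f n.
Proof. induction n; [reflexivity|]. rewrite !sumZ_S, IHn. lia. Qed.

Lemma sumZ_sub f g n : sumZ (fun i => f i - g i) n = sumZ f n - sumZ g n.
Proof. induction n; [reflexivity|]. rewrite !sumZ_S, IHn. lia. Qed.

Lemma sumZ_const c n : sumZ (fun _ => c) n = c * Z.of_nat n.
Proof. induction n; [rewrite !sumZ_0; lia|]. rewrite !sumZ_S, IHn. lia. Qed.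

Lemma sumZ_split f n m :
  sumZ f (n + m) = sumZ f n + sumZ (fun i => f (Z.of_nat n + i)) m.
Proof.
  induction m.
  - rewrite Nat.add_0_r, sumZ_0. lia.
  - rewrite Nat.add_succ_r, !sumZ_S, IHm. rewrite Nat2Z.inj_add. lia.
Qed.

Lemma sumZ_Sl f n : sumZ f (S n) = f 0 + sumZ (fun i => f (i + 1)) n.
Proof.
  change (S n) with (1 + n)%nat. rewrite sumZ_split.
  rewrite sumZ_S, sumZ_0. change (Z.of_nat 0) with 0. rewrite Z.add_0_l. f_equal.
  apply sumZ_ext. intros; f_equal; lia.
Qed.

Lemma sumZ_rev f n : sumZ f n = sumZ (fun i => f (Z.of_nat n - 1 - i)) n.
Proof.
  induction n; [reflexivity|].
  rewrite sumZ_S, sumZ_Sl. rewrite IHn.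
  replace (Z.of_nat (S n) - 1 - 0) with (Z.of_nat n) by lia.
  rewrite Z.add_comm. f_equal. apply sumZ_ext. intros; f_equal; lia.
Qed.

Lemma sumZ_swap (g : Z -> Z -> Z) n m :
  sumZ (fun i => sumZ (fun j => g i j) m) n = sumZ (fun j => sumZ (fun i => g i j) n) m.
Proof.
  induction n.
  - rewrite sumZ_0, (sumZ_ext _ (fun _ => 0)), sumZ_const; [lia|]. intros; apply sumZ_0.
  - rewrite sumZ_S, IHn. rewrite <- sumZ_add. apply sumZ_ext. intros. rewrite sumZ_S. lia.
Qed.

Lemma sumZ_div d f g n :
  (forall i, 0 <= i < Z.of_nat n -> (d | f i - g i)) -> (d | sumZ f n - sumZ g n).
Proof.
  induction n; intros H.
  - simpl. apply Z.divide_0_r.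
  - rewrite !sumZ_S.
    replace (sumZ f n + f (Z.of_nat n) - (sumZ g n + g (Z.of_nat n)))
      with ((sumZ f n - sumZ g n) + (f (Z.of_nat n) - g (Z.of_nat n))) by lia.
    apply Z.divide_add_r; [apply IHn; intros; apply H; lia | apply H; lia].
Qed.

Lemma In_L i n : In i (L n) <-> 0 <= i < Z.of_nat n.
Proof.
  unfold L. rewrite in_map_iff. split.
  - intros [x [<- Hx]]. apply in_seq in Hx. lia.
  - intros H. exists (Z.to_nat i). split; [lia|]. apply in_seq. lia.
Qed.

Lemma fold_perm (l l' : list Z) : Permutation l l' ->
  fold_right Z.add 0 l = fold_right Z.add 0 l'.
Proof. induction 1; simpl; lia. Qed.

Lemma sumZ_perm (s f : Z -> Z) n :
  (forall i, 0 <= i < Z.of_nat n -> 0 <= s i < Z.of_nat n) ->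
  (forall i j, 0 <= i < Z.of_nat n -> 0 <= j < Z.of_nat n -> s i = s j -> i = j) ->
  sumZ (fun i => f (s i)) n = sumZ f n.
Proof.
  intros Hr Hi. unfold sumZ.
  rewrite <- (map_map s f). apply fold_perm. apply Permutation_map.
  apply NoDup_Permutation_bis.
  - apply NoDup_map_NoDup_ForallPairs.
    + intros x y Hx Hy. apply In_L in Hx. apply In_L in Hy. apply Hi; auto.
    + unfold L. apply NoDup_map_NoDup_ForallPairs.
      * intros x y _ _. lia.
      * apply seq_NoDup.
  - rewrite length_map. lia.
  - intros x Hx. apply in_map_iff in Hx. destruct Hx as [y [<- Hy]].
    apply In_L in Hy. apply In_L. auto.
Qed.

Lemma sum_id n : 2 * sumZ (fun i => i) n = Z.of_nat n * (Z.of_nat n - 1).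
Proof. induction n; [reflexivity|]. rewrite sumZ_S. lia. Qed.

Lemma sum_sq n : 6 * sumZ (fun i => i * i) n =
  (Z.of_nat n - 1) * Z.of_nat n * (2 * Z.of_nat n - 1).
Proof. induction n; [reflexivity|]. rewrite sumZ_S. lia. Qed.

Lemma sum_count F n : 0 <= F <= Z.of_nat n ->
  sumZ (fun j => if j <? F then 1 else 0) n = F.
Proof.
  induction n; intros H.
  - rewrite sumZ_0; simpl in *; lia.
  - rewrite sumZ_S. destruct (Z.eq_dec F (Z.of_nat (S n))).
    + subst. rewrite (sumZ_ext _ (fun _ => 1)).
      * rewrite sumZ_const. replace (Z.of_nat n <? Z.of_nat (S n)) with true.
        -- lia.
        -- symmetry; apply Z.ltb_lt; lia.
      * intros; rewrite (proj2 (Z.ltb_lt _ _)) by lia; auto.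
    + rewrite IHn by lia. replace (Z.of_nat n <? F) with false. lia.
      symmetry; apply Z.ltb_ge; lia.
Qed.

Lemma sum_wcount g n : -1 <= g < Z.of_nat n ->
  2 * sumZ (fun r => if g <? r then r else 0) n = Z.of_nat n * (Z.of_nat n - 1) - g * (g + 1).
Proof.
  induction n; intros H.
  - rewrite sumZ_0; simpl in *; nia.
  - rewrite sumZ_S. destruct (Z.eq_dec g (Z.of_nat n)).
    + subst. rewrite (sumZ_ext _ (fun _ => 0)).
      * rewrite sumZ_const, Z.ltb_irrefl. nia.
      * intros; rewrite (proj2 (Z.ltb_ge _ _)) by lia; auto.
    + rewrite Z.mul_add_distr_l, IHn by lia. rewrite (proj2 (Z.ltb_lt _ _)) by lia. nia.
Qed.

Definition T (x K : Z) : Z := sumZ (fun r => r * (x * r / K)) (Z.to_nat K).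

Definition E (h k : Z) : Z :=
  6*h*(h-1)*k*(k-1) - 3*h*(h-1)*(k-1) - (1-k*k)*(h-1)*(2*h-1).

Lemma div_bounds a b : 0 < b -> b * (a / b) <= a < b * (a / b) + b.
Proof.
  intros Hb. pose proof (Z.div_mod a b ltac:(lia)). pose proof (Z.mod_pos_bound a b Hb). lia.
Qed.

Lemma not_div_small h k j : 0 < h -> Z.gcd h k = 1 -> 1 <= j < h -> (j * k) mod h <> 0.
Proof.
  intros Hh Hg Hj Hm.
  apply Z.mod_divide in Hm; [|lia].
  assert (Hr : rel_prime h k). { apply Zgcd_1_rel_prime; auto. }
  rewrite Z.mul_comm in Hm. apply Gauss in Hm; auto. apply Z.divide_pos_le in Hm; lia.
Qed.

Section Recip.
Variables h k : Z.
Hypothesis Hh : 0 < h.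
Hypothesis Hk : 0 < k.
Hypothesis Hg : Z.gcd h k = 1.

Let g j := (j + 1) * k / h.
Let rho j := ((j + 1) * k) mod h.

Lemma g_rho j : h * g j + rho j = (j + 1) * k.
Proof. unfold g, rho. symmetry. apply Z.div_mod. lia. Qed.

Lemma rho_range j : 0 <= j < h - 1 -> 1 <= rho j <= h - 1.
Proof.
  intros Hj. unfold rho. pose proof (Z.mod_pos_bound ((j+1)*k) h Hh).
  pose proof (not_div_small h k (j+1) Hh Hg ltac:(lia)). lia.
Qed.

Lemma g_range j : 0 <= j < h - 1 -> 0 <= g j < k.
Proof.
  intros Hj. pose proof (g_rho j). pose proof (rho_range j Hj). nia.
Qed.

Lemma ind_eq j r : 0 <= j < h - 1 -> 0 <= r < k ->
  (j <? h * r / k) = (g j <? r).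
Proof.
  intros Hj Hr. pose proof (g_rho j) as G. pose proof (rho_range j Hj) as R.
  pose proof (div_bounds (h*r) k Hk) as D.
  destruct (Z.ltb_spec j (h*r/k)); destruct (Z.ltb_spec (g j) r); auto.
  - exfalso. (* (j+1) k <= h r, and h g + rho = (j+1)k, r <= g *)
    nia.
  - exfalso. (* h*r/k <= j and g < r : (j+1)k > hr and (j+1) k < h (g+1) <= h r *)
    nia.
Qed.

Lemma T_swap : 2 * T h k = sumZ (fun j => k * (k - 1) - g j * (g j + 1)) (Z.to_nat (h - 1)).
Proof.
  unfold T.
  rewrite (sumZ_ext _ (fun r => sumZ (fun j => if g j <? r then r else 0) (Z.to_nat (h-1)))).
  - rewrite sumZ_swap. rewrite <- sumZ_scal. apply sumZ_ext. intros j Hj.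
    rewrite sum_wcount; [rewrite Z2Nat.id by lia; lia|].
    pose proof (g_range j ltac:(lia)). lia.
  - intros r Hr. rewrite Z2Nat.id in Hr by lia.
    assert (Hq : 0 <= h * r / k <= Z.of_nat (Z.to_nat (h - 1))).
    { rewrite Z2Nat.id by lia. split. apply Z.div_pos; nia.
      pose proof (div_bounds (h*r) k Hk). nia. }
    rewrite <- (sum_count _ _ Hq) at 1. rewrite <- sumZ_scal. apply sumZ_ext.
    intros j Hj. rewrite Z2Nat.id in Hj by lia. rewrite ind_eq by lia.
    destruct (g j <? r); lia.
Qed.


Lemma rho_perm (f : Z -> Z) :
  sumZ (fun j => f (rho j)) (Z.to_nat (h - 1)) = sumZ (fun j => f (j + 1)) (Z.to_nat (h - 1)).
Proof.
  rewrite <- (sumZ_perm (fun j => rho j - 1) (fun i => f (i + 1))).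
  - apply sumZ_ext. intros; f_equal; lia.
  - intros i Hi. rewrite Z2Nat.id in * by lia. pose proof (rho_range i Hi). lia.
  - intros i j Hi Hj Hij. rewrite Z2Nat.id in * by lia.
    assert (Hd : (h | (i - j) * k)).
    { pose proof (g_rho i). pose proof (g_rho j). exists (g i - g j). nia. }
    rewrite Z.mul_comm in Hd. apply Gauss in Hd; [|apply Zgcd_1_rel_prime; auto].
    destruct Hd as [q Hq]. destruct (Z.lt_trichotomy q 0) as [?|[?|?]]; nia.
Qed.

Lemma T_kh : T k h = sumZ (fun j => (j + 1) * g j) (Z.to_nat (h - 1)).
Proof.
  unfold T. replace (Z.to_nat h) with (S (Z.to_nat (h - 1))) by lia.
  rewrite sumZ_Sl. rewrite Z.mul_0_l, Z.add_0_l. apply sumZ_ext. intros j _.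
  unfold g. f_equal. f_equal. ring.
Qed.

Lemma recip : 12 * h * T h k + 12 * k * T k h = E h k.
Proof.
  set (n := Z.to_nat (h - 1)).
  set (G2 := sumZ (fun j => g j * g j) n).
  set (G1 := sumZ (fun j => g j) n).
  set (Q := sumZ (fun j => (j + 1) * (j + 1)) n).
  set (P := sumZ (fun j => j + 1) n).
  set (S1 := sumZ (fun j => (j + 1) * rho j) n).
  assert (H0 : 2 * T h k = (h - 1) * k * (k - 1) - G2 - G1).
  { rewrite T_swap. fold n. unfold G2, G1.
    replace ((h - 1) * k * (k - 1)) with (k * (k - 1) * Z.of_nat n) by (unfold n; rewrite Z2Nat.id by lia; ring).
    rewrite <- sumZ_const, <- !sumZ_sub. apply sumZ_ext. intros; ring. }
  assert (HSR2 : sumZ (fun j => rho j * rho j) n = Q).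
  { unfold Q, n. apply (rho_perm (fun x => x * x)). }
  assert (HSR1 : sumZ (fun j => rho j) n = P).
  { unfold P, n. apply (rho_perm (fun x => x)). }
  assert (H1 : h * h * G2 = k * k * Q - 2 * k * S1 + Q).
  { rewrite <- HSR2 at 2. unfold G2, Q, S1. rewrite <- !sumZ_scal, <- sumZ_sub, <- sumZ_add.
    apply sumZ_ext. intros j _. pose proof (g_rho j).
    replace (rho j) with ((j+1)*k - h * g j) by lia. ring. }
  assert (H2 : S1 = k * Q - h * T k h).
  { rewrite T_kh. fold n. unfold S1, Q. rewrite <- !sumZ_scal, <- sumZ_sub.
    apply sumZ_ext. intros j _. pose proof (g_rho j).
    replace (rho j) with ((j+1)*k - h * g j) by lia. ring. }
  assert (H3 : h * G1 = k * P - P).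
  { rewrite <- HSR1 at 2. unfold G1, P. rewrite <- !sumZ_scal, <- sumZ_sub.
    apply sumZ_ext. intros j _. pose proof (g_rho j).
    replace (rho j) with ((j+1)*k - h * g j) by lia. ring. }
  assert (HQ : 6 * Q = (h - 1) * h * (2 * h - 1)).
  { unfold Q, n. pose proof (sum_sq (Z.to_nat h)) as SS.
    replace (Z.to_nat h) with (S (Z.to_nat (h - 1))) in SS by lia.
    rewrite sumZ_Sl in SS. rewrite Nat2Z.inj_succ, Z2Nat.id in SS by lia. replace (Z.succ (h-1)) with h in SS by lia.
    lia. }
  assert (HP : 2 * P = h * (h - 1)).
  { unfold P, n. pose proof (sum_id (Z.to_nat h)) as SS.
    replace (Z.to_nat h) with (S (Z.to_nat (h - 1))) in SS by lia.
    rewrite sumZ_Sl in SS. rewrite Nat2Z.inj_succ, Z2Nat.id in SS by lia. replace (Z.succ (h-1)) with h in SS by lia.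
    lia. }
  apply (Z.mul_cancel_l _ _ h); [lia|].
  assert (Hc : h * (12 * h * T h k + 12 * k * T k h) - h * E h k =
     6*h*h*(2 * T h k - ((h - 1) * k * (k - 1) - G2 - G1))
     - 6*(h * h * G2 - (k * k * Q - 2 * k * S1 + Q))
     - 6*h*(h * G1 - (k * P - P))
     + 12*k*(S1 - (k * Q - h * T k h))
     - (1 - k*k) * (6 * Q - (h - 1) * h * (2 * h - 1))
     - 3*h*(k-1) * (2 * P - h * (h - 1))).
  { unfold E. ring. }
  rewrite H0, H1, H2, H3, HQ, HP in Hc. rewrite !Z.sub_diag, !Z.mul_0_r in Hc. lia.
Qed.

End Recip.

Lemma div_char a b q : 0 < b -> b * q <= a < b * q + b -> a / b = q.
Proof.
  intros Hb H. symmetry. apply (Z.div_unique a b q (a - b * q)); lia.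
Qed.

Lemma sumZ_evenodd f N :
  sumZ f (2 * N) = sumZ (fun r => f (2 * r)) N + sumZ (fun r => f (2 * r + 1)) N.
Proof.
  induction N.
  - reflexivity.
  - replace (2 * S N)%nat with (S (S (2 * N))) by lia.
    rewrite !sumZ_S, IHN. rewrite !Nat2Z.inj_succ, Nat2Z.inj_mul. simpl (Z.of_nat 2).
    replace (Z.succ (2 * Z.of_nat N)) with (2 * Z.of_nat N + 1) by lia. lia.
Qed.

Section Parity.
Variables (N y : Z).
Hypothesis HN : 0 <= N.
Let K := 2 * N + 1.
Hypothesis Hg : Z.gcd K y = 1.
Let g t := y * t / K.

Lemma refl_g t : 1 <= t <= K - 1 -> g (K - t) = y - 1 - g t.
Proof.
  intros Ht. unfold g. apply div_char; [lia|].
  pose proof (div_bounds (y * t) K ltac:(lia)).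
  pose proof (not_div_small K y t ltac:(lia) Hg ltac:(lia)) as Hnd.
  assert (y * t <> K * (y * t / K)).
  { intro E0. apply Hnd. rewrite Z.mul_comm, E0, Z.mul_comm. apply Z.mod_mul. lia. }
  nia.
Qed.

Let n := Z.to_nat N.

Lemma Tpar : (2 | T y K - ((y - 1) * N + sumZ (fun r => g (2 * r + 2)) n)).
Proof.
  unfold T. replace (Z.to_nat K) with (S (2 * n)) by (unfold K, n; lia).
  rewrite sumZ_Sl, Z.mul_0_l, Z.add_0_l, sumZ_evenodd.
  rewrite (sumZ_rev (fun r => (2 * r + 1) * (y * (2 * r + 1) / K))).
  rewrite <- sumZ_add.
  set (A := sumZ (fun r => g (2 * r + 2)) n).
  replace ((y - 1) * N + A) with (sumZ (fun r => (y - 1) + g (2 * r + 2)) n).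
  2:{ rewrite sumZ_add, sumZ_const. unfold A, n. rewrite Z2Nat.id by lia. lia. }
  apply sumZ_div. intros r Hr. unfold n in Hr. rewrite Z2Nat.id in Hr by lia.
  replace (2 * (Z.of_nat n - 1 - r) + 1) with (K - (2 * r + 2)) by (unfold K, n; lia).
  replace (2 * r + 1 + 1) with (2 * r + 2) by lia.
  change (y * (K - (2 * r + 2)) / K) with (g (K - (2 * r + 2))).
  rewrite refl_g by (unfold K; lia).
  exists ((r + 1) * g (2 * r + 2) + (N - r - 1) * (y - 1 - g (2 * r + 2)) - g (2 * r + 2)).
  change (y * (2 * r + 2) / K) with (g (2 * r + 2)).
  generalize (g (2 * r + 2)). intro z. unfold K. ring.
Qed.


Lemma Apar : (2 | sumZ (fun r => g (2 * r + 2)) n -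
   (sumZ (fun r => g (r + 1)) n + (y - 1) * sumZ (fun r => if Z.even (r + 1) then 0 else 1) n)).
Proof.
  assert (HA : sumZ (fun r => g (2 * r + 2)) n =
     sumZ (fun i => if Z.even (i + 1) then g (i + 1) else 0) (n + n)).
  { replace (n + n)%nat with (2 * n)%nat by lia. rewrite sumZ_evenodd.
    rewrite (sumZ_ext (fun r => if Z.even (2 * r + 1) then _ else _) (fun _ => 0)).
    2:{ intros. rewrite Z.even_odd. auto. }
    rewrite sumZ_const, Z.mul_0_l, Z.add_0_l. apply sumZ_ext. intros r _.
    replace (2 * r + 1 + 1) with (2 * (r + 1)) by ring. rewrite Z.even_even. f_equal. ring. }
  rewrite HA, sumZ_split, (sumZ_rev (fun i => if Z.even (Z.of_nat n + i + 1) then _ else _)).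
  rewrite <- sumZ_scal, <- !sumZ_add.
  apply sumZ_div. intros i Hi. unfold n in Hi. rewrite Z2Nat.id in Hi by lia.
  replace (Z.of_nat n + (Z.of_nat n - 1 - i) + 1) with (K - (i + 1)) by (unfold K, n; lia).
  rewrite refl_g by (unfold K; lia).
  destruct (Z.Even_or_Odd i) as [[q Hq]|[q Hq]].
  - replace (i + 1) with (2 * q + 1) by lia.
    replace (K - (2 * q + 1)) with (2 * (N - q)) by (unfold K; lia).
    rewrite Z.even_odd, Z.even_even.
    exists (- g (2 * q + 1)). ring.
  - replace (i + 1) with (2 * (q + 1)) by lia.
    replace (K - (2 * (q + 1))) with (2 * (N - q - 1) + 1) by (unfold K; lia).
    rewrite Z.even_odd, Z.even_even.
    exists 0. ring.
Qed.

End Parity.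

Lemma c_par (n : nat) :
  (4 | 2 * sumZ (fun r => if Z.even (r + 1) then 0 else 1) n - Z.of_nat n * (Z.of_nat n + 1)).
Proof.
  induction n.
  - rewrite sumZ_0. exists 0. reflexivity.
  - rewrite sumZ_S. destruct IHn as [w Hw]. rewrite Nat2Z.inj_succ.
    destruct (Z.Even_or_Odd (Z.of_nat n)) as [[q Hq]|[q Hq]]; rewrite Hq in *.
    + replace (2 * q + 1) with (2 * q + 1) by ring. rewrite Z.even_odd.
      exists (w - q). unfold Z.succ. nia.
    + replace (2 * q + 1 + 1) with (2 * (q + 1)) by ring. rewrite Z.even_even.
      exists (w - q - 1). unfold Z.succ. nia.
Qed.

Lemma rel_prime_odd2 N x : Z.gcd (2 * N + 1) x = 1 -> Z.gcd (2 * N + 1) (2 * x) = 1.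
Proof.
  intros H. apply Zgcd_1_rel_prime. apply rel_prime_mult.
  - apply bezout_rel_prime. apply (Bezout_intro _ _ _ 1 (- N)). ring.
  - apply Zgcd_1_rel_prime. auto.
Qed.

Lemma parity N x : 0 <= N -> Z.gcd (2 * N + 1) x = 1 ->
  (4 | 2 * (T (2 * x) (2 * N + 1) + T x (2 * N + 1)) - N * (N + 1) - 2 * x * N).
Proof.
  intros HN Hg.
  pose proof (rel_prime_odd2 N x Hg) as Hg2.
  pose proof (Tpar N x HN Hg) as [a Ha].
  pose proof (Tpar N (2 * x) HN Hg2) as [b Hb].
  pose proof (Apar N (2 * x) HN Hg2) as [d Hd].
  pose proof (c_par (Z.to_nat N)) as [e He]. rewrite Z2Nat.id in He by lia.
  set (c := sumZ (fun r => if Z.even (r + 1) then 0 else 1) (Z.to_nat N)) in *.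
  set (A1 := sumZ (fun r => x * (2 * r + 2) / (2 * N + 1)) (Z.to_nat N)) in *.
  assert (HH : sumZ (fun r => 2 * x * (r + 1) / (2 * N + 1)) (Z.to_nat N) = A1).
  { unfold A1. apply sumZ_ext. intros. f_equal. ring. }
  rewrite HH in Hd.
  set (A2 := sumZ (fun r => 2 * x * (2 * r + 2) / (2 * N + 1)) (Z.to_nat N)) in *.
  exists (x * N - N + A1 + (x - 1) * c - 2 * (x - 1) * e + e * (2 * x - 1) + a + b + d).
  nia.
Qed.

Definition W (x K : Z) : Z := 2*x*(K-1)*(2*K-1) - 3*K*(K-1) - 12 * T x K.
Definition X1 (k h h' : Z) : Z := -9*k + 9*(k*k) + h*(-9 + 5*(k*k)) - 2*(k*k)*h'.
Definition X2 (k h h' : Z) : Z := 3*(k*k) + h*(9 + k*k) - (k*k)*h'.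
Definition Z1 (k m h h' : Z) : Z :=
  9 * W (2*h) m + 3 * W (2*h) k + 3 * W h k - 9 * W h m + 2 * X1 k h h' - 36 * k.
Definition Z2 (k m h h' : Z) : Z :=
  9 * W h m + 3 * W (2*h) k + 3 * W h k - 27 * W (2*h) m + 4 * X2 k h h' - 36 * k.

Lemma gcd_mul2 K x : Z.gcd x K = 1 -> Z.Odd K -> Z.gcd (2 * x) K = 1.
Proof.
  intros H [N ->]. rewrite Z.gcd_comm. apply rel_prime_odd2. rewrite Z.gcd_comm. auto.
Qed.

Lemma rel3 h k t : Z.gcd h k = 1 -> k = t * 3 -> rel_prime h 3.
Proof.
  intros Hg Ht. apply Zgcd_1_rel_prime in Hg. destruct Hg as [_ _ Hg'].
  constructor; [apply Z.divide_1_l|apply Z.divide_1_l|].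
  intros x Hx H3. apply Hg'; auto. apply (Z.divide_trans _ 3); auto. exists t; lia.
Qed.

Lemma combine72 k h z : 0 < k -> Z.Odd k -> (3 | k) -> Z.gcd h k = 1 ->
  (9 * k | 2 * h * z) -> (8 | z) -> (72 * k | z).
Proof.
  intros Hk [N HN] [t Ht] Hg H9 H8.
  assert (R1 : rel_prime (9 * k) (2 * h)).
  { apply rel_prime_mult.
    - apply bezout_rel_prime. apply (Bezout_intro _ _ _ 1 (- (9 * N + 4))). lia.
    - apply rel_prime_sym. apply rel_prime_mult; [|apply Zgcd_1_rel_prime; auto].
      replace 9 with (3 * 3) by reflexivity.
      apply rel_prime_mult; apply (rel3 h k t); auto. }
  apply Gauss in H9; auto.
  destruct H9 as [q Hq]. subst z.
  assert (R2 : rel_prime 8 (9 * k)).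
  { assert (R3 : rel_prime (9 * k) 2).
    { apply bezout_rel_prime. apply (Bezout_intro _ _ _ 1 (- (9 * N + 4))). lia. }
    apply rel_prime_sym. replace 8 with (2 * (2 * 2)) by reflexivity.
    repeat apply rel_prime_mult; auto. }
  rewrite (Z.mul_comm q) in H8. apply Gauss in H8; auto.
  destruct H8 as [r Hr]. subst q. exists r. ring.
Qed.

Lemma gcd_div h k m : Z.gcd h k = 1 -> (m | k) -> Z.gcd h m = 1.
Proof.
  intros H Hm. apply Zgcd_1_rel_prime. apply rel_prime_sym.
  apply (rel_prime_div k). apply rel_prime_sym. apply Zgcd_1_rel_prime. auto. auto.
Qed.

Lemma main_pos a h h' c b : 0 <= a -> 0 < h -> Z.gcd h (6*a+3) = 1 ->
  h * h' + 1 = (6*a+3) * c -> h' = 2 * b ->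
  (72 * (6*a+3) | Z1 (6*a+3) (2*a+1) h h') /\ (72 * (6*a+3) | Z2 (6*a+3) (2*a+1) h h').
Proof.
  intros Ha Hh Hg HC Hb.
  set (k := 6*a+3) in *. set (m := 2*a+1).
  assert (Hko : Z.Odd k) by (exists (3*a+1); unfold k; lia).
  assert (Hmo : Z.Odd m) by (exists a; unfold m; lia).
  assert (Hg2 : Z.gcd (2*h) k = 1) by (apply gcd_mul2; auto).
  assert (Hgm : Z.gcd h m = 1) by (apply (gcd_div h k); auto; exists 3; unfold k, m; lia).
  assert (Hg2m : Z.gcd (2*h) m = 1) by (apply gcd_mul2; auto).
  pose proof (recip h k Hh ltac:(unfold k; lia) Hg) as R1.
  pose proof (recip (2*h) k ltac:(lia) ltac:(unfold k; lia) Hg2) as R2.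
  pose proof (recip h m Hh ltac:(unfold m; lia) Hgm) as R3.
  pose proof (recip (2*h) m ltac:(lia) ltac:(unfold m; lia) Hg2m) as R4.
  pose proof (parity (3*a+1) h ltac:(lia) ltac:(rewrite Z.gcd_comm; replace (2*(3*a+1)+1) with k by (unfold k; lia); auto)) as [v1 P1].
  pose proof (parity a h ltac:(lia) ltac:(rewrite Z.gcd_comm; auto)) as [v2 P2].
  replace (2*(3*a+1)+1) with k in P1 by (unfold k; lia).
  fold m in P2.
  set (t1 := T h k) in *. set (t2 := T (2*h) k) in *. set (t3 := T h m) in *. set (t4 := T (2*h) m) in *.
  set (s1 := T k h) in *. set (s2 := T k (2*h)) in *. set (s3 := T m h) in *. set (s4 := T m (2*h)) in *.
  split; apply (combine72 k h); auto; try (unfold k; lia); try (exists (2*a+1); unfold k; lia).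
  - exists ((-20*h*h*m + 8*h*h + 36*h*m - 20*h - 8*c*m*m) + 8*s1 + 4*s2 + 4*s4 - 8*s3).
    assert (Hc : 2*h*Z1 k m h h' - ((-20*h*h*m + 8*h*h + 36*h*m - 20*h - 8*c*m*m) + 8*s1 + 4*s2 + 4*s4 - 8*s3) * (9*k)
      = -6*(12*h*t1 + 12*k*s1 - E h k) - 3*(12*(2*h)*t2 + 12*k*s2 - E (2*h) k)
        - 9*(12*(2*h)*t4 + 12*m*s4 - E (2*h) m) + 18*(12*h*t3 + 12*m*s3 - E h m)
        - 8*(k*k)*(h*h' + 1 - k*c)).
    { unfold Z1, W, X1, E. fold t1 t2 t3 t4. unfold k, m. ring. }
    rewrite R1, R2, R3, R4, HC, !Z.sub_diag in Hc. lia.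
  - exists ((225*h*a*a + 144*h*a + 27*h - 36*a*a*b - 27*a*a - 36*a*b - 54*a - 9*b - 18) - 9*v1 - 27*v2 + 27*t3).
    assert (Hc : Z1 k m h h' - ((225*h*a*a + 144*h*a + 27*h - 36*a*a*b - 27*a*a - 36*a*b - 54*a - 9*b - 18) - 9*v1 - 27*v2 + 27*t3) * 8
      = -18*(2 * (t2 + t1) - (3*a+1) * (3*a+1+1) - 2*h*(3*a+1) - v1*4)
        - 54*(2 * (t4 + t3) - a * (a+1) - 2*h*a - v2*4)).
    { unfold Z1, W, X1. fold t1 t2 t3 t4. rewrite Hb. unfold k, m. ring. }
    rewrite P1, P2, !Z.sub_diag in Hc. lia.
  - exists ((-8*h*h*m - 4*h*h + 24*h*m - 8*h - 8*c*m*m) + 8*s1 + 4*s2 + 8*s3 - 12*s4).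
    assert (Hc : 2*h*Z2 k m h h' - ((-8*h*h*m - 4*h*h + 24*h*m - 8*h - 8*c*m*m) + 8*s1 + 4*s2 + 8*s3 - 12*s4) * (9*k)
      = -6*(12*h*t1 + 12*k*s1 - E h k) - 3*(12*(2*h)*t2 + 12*k*s2 - E (2*h) k)
        - 18*(12*h*t3 + 12*m*s3 - E h m) + 27*(12*(2*h)*t4 + 12*m*s4 - E (2*h) m)
        - 8*(k*k)*(h*h' + 1 - k*c)).
    { unfold Z2, W, X2, E. fold t1 t2 t3 t4. unfold k, m. ring. }
    rewrite R1, R2, R3, R4, HC, !Z.sub_diag in Hc. lia.
  - exists ((90*h*a*a + 90*h*a + 27*h - 36*a*a*b - 27*a*a - 36*a*b - 54*a - 9*b - 18) - 9*v1 - 27*v2 + 54*t4).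
    assert (Hc : Z2 k m h h' - ((90*h*a*a + 90*h*a + 27*h - 36*a*a*b - 27*a*a - 36*a*b - 54*a - 9*b - 18) - 9*v1 - 27*v2 + 54*t4) * 8
      = -18*(2 * (t2 + t1) - (3*a+1) * (3*a+1+1) - 2*h*(3*a+1) - v1*4)
        - 54*(2 * (t4 + t3) - a * (a+1) - 2*h*a - v2*4)).
    { unfold Z2, W, X2. fold t1 t2 t3 t4. rewrite Hb. unfold k, m. ring. }
    rewrite P1, P2, !Z.sub_diag in Hc. lia.
Qed.

Lemma T_shift x K j : 0 < K ->
  T (x + K * j) K = T x K + j * sumZ (fun r => r * r) (Z.to_nat K).
Proof.
  intros HK. unfold T. rewrite <- sumZ_scal, <- sumZ_add. apply sumZ_ext. intros r _.
  replace ((x + K * j) * r) with (x * r + (j * r) * K) by ring.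
  rewrite Z.div_add by lia. ring.
Qed.

Lemma W_shift x K j : 0 < K -> W (x + K * j) K = W x K.
Proof.
  intros HK. unfold W. rewrite T_shift by auto.
  pose proof (sum_sq (Z.to_nat K)) as S6. rewrite Z2Nat.id in S6 by lia.
  nia.
Qed.

Lemma main_all a h h' : 0 <= a -> Z.gcd h (6*a+3) = 1 ->
  (6*a+3 | h * h' + 1) -> (2 | h') ->
  (72 * (6*a+3) | Z1 (6*a+3) (2*a+1) h h') /\ (72 * (6*a+3) | Z2 (6*a+3) (2*a+1) h h').
Proof.
  intros Ha Hg [c Hc] [b Hb].
  destruct (Z.lt_ge_cases 0 h) as [Hh|Hh].
  - apply (main_pos a h h' c b); auto; lia.
  - set (k := 6*a+3) in *. set (m := 2*a+1).
    set (N := 1 - h).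
    set (h1 := h + k * N).
    assert (Hh1 : 0 < h1) by (unfold h1, N, k; nia).
    assert (Hg1 : Z.gcd h1 k = 1).
    { unfold h1. rewrite Z.gcd_comm, Z.mul_comm, Z.gcd_add_mult_diag_r, Z.gcd_comm. auto. }
    destruct (main_pos a h1 h' (c + N * h') b Ha Hh1 Hg1 ltac:(unfold h1; lia) ltac:(lia)) as [D1 D2].
    assert (EW1 : W h1 k = W h k) by (apply W_shift; unfold k; lia).
    assert (EW2 : W (2*h1) k = W (2*h) k).
    { replace (2*h1) with (2*h + k*(2*N)) by (unfold h1; ring). apply W_shift; unfold k; lia. }
    assert (EW3 : W h1 m = W h m).
    { replace h1 with (h + m*(3*N)) by (unfold h1, k, m; ring). apply W_shift; unfold m; lia. }
    assert (EW4 : W (2*h1) m = W (2*h) m).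
    { replace (2*h1) with (2*h + m*(6*N)) by (unfold h1, k, m; ring). apply W_shift; unfold m; lia. }
    split.
    + assert (E1 : Z1 k m h h' = Z1 k m h1 h' - 72 * k * (N * (5*a*a + 5*a + 1))).
      { unfold Z1. rewrite EW1, EW2, EW3, EW4. unfold X1, h1, k. ring. }
      rewrite E1. apply Z.divide_sub_r; auto. exists (N * (5*a*a + 5*a + 1)). ring.
    + assert (E2 : Z2 k m h h' = Z2 k m h1 h' - 72 * k * (N * (2*a*a + 2*a + 1))).
      { unfold Z2. rewrite EW1, EW2, EW3, EW4. unfold X2, h1, k. ring. }
      rewrite E2. apply Z.divide_sub_r; auto. exists (N * (2*a*a + 2*a + 1)). ring.
Qed.
Open Scope R_scope.

Lemma Int_part_div a K : (0 < K)%Z -> Int_part (IZR a / IZR K) = (a / K)%Z.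
Proof.
  intros HK. unfold Int_part.
  pose proof (div_bounds a K HK) as [H1 H2].
  assert (HKr : 0 < IZR K) by (apply IZR_lt; auto).
  rewrite <- (tech_up (IZR a / IZR K) (a / K + 1)); [ring| |].
  - rewrite plus_IZR. apply (Rmult_lt_reg_l (IZR K)); auto.
    field_simplify; [|lra]. rewrite <- !mult_IZR, <- plus_IZR. apply IZR_lt. lia.
  - rewrite plus_IZR. apply (Rmult_le_reg_l (IZR K)); auto.
    field_simplify; [|lra]. rewrite <- !mult_IZR, <- !plus_IZR. apply IZR_le. lia.
Qed.

Lemma fold_IZR_div (f : nat -> Z) (c : R) (l : list nat) :
  fold_right Rplus 0 (map (fun r => IZR (f r) / c) l) =
  IZR (fold_right Z.add 0%Z (map f l)) / c.
Proof.
  induction l; simpl.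
  - unfold Rdiv. ring.
  - rewrite IHl, plus_IZR. unfold Rdiv. ring.
Qed.

Lemma IZR_div_eq A B C0 D0 : B <> 0%Z -> D0 <> 0%Z -> (A * D0 = C0 * B)%Z ->
  IZR A / IZR B = IZR C0 / IZR D0.
Proof.
  intros HB HD H. apply (f_equal IZR) in H. rewrite !mult_IZR in H.
  apply not_0_IZR in HB. apply not_0_IZR in HD.
  field_simplify_eq; auto. lra.
Qed.

Lemma dedekind_W x K : (0 < K)%Z -> dedekind_s x K = IZR (W x K) / IZR (12 * K).
Proof.
  intros HK. unfold dedekind_s.
  set (f := fun r : Z => (2 * x * (r * r) - 2 * K * (r * (x * r / K)) - K * r)%Z).
  rewrite (map_ext_in _ (fun r : nat => IZR (f (Z.of_nat r)) / IZR (2 * K * K))).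
  2:{ intros r _. unfold rfloor. rewrite INR_IZR_INZ.
      replace (IZR x * IZR (Z.of_nat r) / IZR K) with (IZR (x * Z.of_nat r) / IZR K)
        by (rewrite mult_IZR; reflexivity).
      rewrite Int_part_div by auto. unfold f.
      rewrite !minus_IZR, !mult_IZR.
      assert (IZR K <> 0) by (apply not_0_IZR; lia).
      field. auto. }
  rewrite (fold_IZR_div (fun r => f (Z.of_nat r))).
  apply IZR_div_eq; try lia.
  assert (Hs : fold_right Z.add 0%Z (map (fun r : nat => f (Z.of_nat r)) (seq 1 (Z.to_nat K - 1)))
     = sumZ f (Z.to_nat K)).
  { unfold sumZ, L. replace (Z.to_nat K) with (S (Z.to_nat K - 1)) at 2 by lia.
    rewrite map_map. cbn [seq map fold_right].
    change (Z.of_nat 0) with 0%Z.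
    assert (f 0%Z = 0%Z) as ->. { unfold f. rewrite !Z.mul_0_r, ?Zdiv_0_l, ?Z.mul_0_r. ring. }
    rewrite Z.add_0_l. reflexivity. }
  rewrite Hs.
  assert (HT : sumZ f (Z.to_nat K) =
     (2 * x * sumZ (fun r => r * r) (Z.to_nat K) - 2 * K * T x K - K * sumZ (fun r => r) (Z.to_nat K))%Z).
  { unfold T. rewrite <- !sumZ_scal, <- !sumZ_sub. apply sumZ_ext. intros. unfold f. ring. }
  rewrite HT. unfold W.
  pose proof (sum_sq (Z.to_nat K)) as S6. pose proof (sum_id (Z.to_nat K)) as S2.
  rewrite Z2Nat.id in S6, S2 by lia.
  nia.
Qed.

Lemma expi_mult a b : Cmult (expi a) (expi b) = expi (a + b).
Proof. unfold expi, Cmult. simpl. rewrite cos_plus, sin_plus. f_equal; ring. Qed.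

Lemma expi_div a b : Cdiv (expi a) (expi b) = expi (a - b).
Proof.
  unfold Cdiv. replace (Cinv (expi b)) with (expi (- b)).
  - rewrite expi_mult. f_equal.
  - unfold Cinv, expi. simpl. rewrite cos_neg, sin_neg.
    pose proof (sin2_cos2 b) as H. unfold Rsqr in H.
    f_equal; replace (cos b * (cos b * 1) + sin b * (sin b * 1)) with 1 by lra; field.
Qed.

Lemma expi_opp t : Copp (expi t) = expi (t + PI).
Proof. unfold Copp, expi. simpl. rewrite neg_cos, neg_sin. reflexivity. Qed.

Lemma expi_per t n : expi (t + 2 * PI * IZR n) = expi t.
Proof.
  destruct (Z_le_gt_dec 0 n) as [Hn|Hn].
  - replace (IZR n) with (INR (Z.to_nat n)) by (rewrite INR_IZR_INZ, Z2Nat.id; auto).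
    unfold expi. replace (t + 2 * PI * INR (Z.to_nat n)) with (t + 2 * INR (Z.to_nat n) * PI) by ring.
    rewrite cos_period, sin_period. reflexivity.
  - replace (IZR n) with (- INR (Z.to_nat (- n))) by (rewrite INR_IZR_INZ, Z2Nat.id, opp_IZR by lia; ring).
    unfold expi.
    set (u := t + 2 * PI * - INR (Z.to_nat (- n))).
    replace t with (u + 2 * INR (Z.to_nat (- n)) * PI) by (unfold u; ring).
    rewrite cos_period, sin_period. reflexivity.
Qed.

Lemma final_eq1 (w1 w2 w3 w4 x n kk mm : R) : kk = 3 * mm -> mm <> 0 ->
  9*w1 + 3*w2 + 3*w3 - 9*w4 + 2*x - 36*kk = n * (72*kk) ->
  PI * (w1 / (12*mm)) + PI * (w2 / (12*kk)) + PI * (w3 / (12*kk)) - PI * (w4 / (12*mm))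
  = - (2 * PI / (36 * kk)) * x + PI + 2 * PI * n.
Proof.
  intros -> Hm H.
  replace w1 with ((n*(72*(3*mm)) - 3*w2 - 3*w3 + 9*w4 - 2*x + 36*(3*mm))/9) by lra.
  field. auto.
Qed.

Lemma final_eq2 (w1 w2 w3 w4 x n kk mm : R) : kk = 3 * mm -> mm <> 0 ->
  9*w1 + 3*w2 + 3*w3 - 27*w4 + 4*x - 36*kk = n * (72*kk) ->
  PI * (w1 / (12*mm)) + PI * (w2 / (12*kk)) + PI * (w3 / (12*kk)) -
  (PI * (w4 / (12*mm)) + PI * (w4 / (12*mm)) + PI * (w4 / (12*mm)))
  = - (2 * PI / (18 * kk)) * x + PI + 2 * PI * n.
Proof.
  intros -> Hm H.
  replace w1 with ((n*(72*(3*mm)) - 3*w2 - 3*w3 + 27*w4 - 4*x + 36*(3*mm))/9) by lra.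
  field. auto.
Qed.

Lemma k_form k : (0 <= k)%Z -> Z.gcd k 6 = 3%Z -> exists a, (0 <= a)%Z /\ k = (6 * a + 3)%Z.
Proof.
  intros Hk Hg.
  assert (H3 : (3 | k)%Z) by (rewrite <- Hg; apply Z.gcd_divide_l).
  destruct H3 as [t Ht].
  destruct (Z.Even_or_Odd t) as [[q Hq]|[q Hq]].
  - exfalso. assert (H2 : (2 | Z.gcd k 6)%Z).
    { apply Z.gcd_greatest; [exists (3 * q)%Z; lia | exists 3%Z; lia]. }
    rewrite Hg in H2. destruct H2 as [r Hr]. lia.
  - exists q. lia.
Qed.

Theorem lemma3p5 (k h h' : Z)
  (hk0 : (0 <= k)%Z) (hk6 : Z.gcd k 6 = 3%Z) (hhk : Z.gcd h k = 1%Z)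
  (hh' : (k | h * h' + 1)%Z) (h'even : (2 | h')%Z) :
  Cdiv (Cmult (Cmult (omega (2 * h) (k / 3)) (omega (2 * h) k)) (omega h k))
       (omega h (k / 3))
  = Copp (expi (- (2 * PI / (36 * IZR k)) *
       IZR (-9 * k + 9 * k ^ 2 + h * (-9 + 5 * k ^ 2) - 2 * k ^ 2 * h')))
  /\
  Cdiv (Cmult (Cmult (omega h (k / 3)) (omega (2 * h) k)) (omega h k))
       (Cmult (Cmult (omega (2 * h) (k / 3)) (omega (2 * h) (k / 3))) (omega (2 * h) (k / 3)))
  = Copp (expi (- (2 * PI / (18 * IZR k)) *
       IZR (3 * k ^ 2 + h * (9 + k ^ 2) - k ^ 2 * h'))).
Proof.
  destruct (k_form k hk0 hk6) as [a [Ha ->]].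
  assert (Hm : ((6 * a + 3) / 3 = 2 * a + 1)%Z).
  { replace (6 * a + 3)%Z with ((2 * a + 1) * 3)%Z by ring. apply Z.div_mul. lia. }
  rewrite Hm.
  destruct (main_all a h h' Ha hhk hh' h'even) as [[n1 E1] [n2 E2]].
  assert (HX1 : (-9 * (6*a+3) + 9 * (6*a+3) ^ 2 + h * (-9 + 5 * (6*a+3) ^ 2) - 2 * (6*a+3) ^ 2 * h')%Z
                = X1 (6*a+3) h h') by (unfold X1; ring).
  assert (HX2 : (3 * (6*a+3) ^ 2 + h * (9 + (6*a+3) ^ 2) - (6*a+3) ^ 2 * h')%Z
                = X2 (6*a+3) h h') by (unfold X2; ring).
  rewrite HX1, HX2.
  unfold omega.
  rewrite !dedekind_W by lia.
  rewrite !expi_mult, !expi_div, !expi_opp.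
  unfold Z1 in E1. unfold Z2 in E2.
  set (kk := (6*a+3)%Z) in *. set (mm := (2*a+1)%Z) in *.
  assert (Hkm : IZR kk = 3 * IZR mm).
  { rewrite <- mult_IZR. f_equal. unfold kk, mm. ring. }
  assert (Hm0 : IZR mm <> 0) by (apply not_0_IZR; unfold mm; lia).
  apply (f_equal IZR) in E1. apply (f_equal IZR) in E2.
  repeat rewrite ?plus_IZR, ?minus_IZR, ?mult_IZR in E1. repeat rewrite ?plus_IZR, ?minus_IZR, ?mult_IZR in E2.
  rewrite !mult_IZR.
  split.
  - match goal with |- expi ?A = expi ?B => transitivity (expi (B + 2*PI*IZR n1)) end.
    + f_equal. apply final_eq1; auto.
    + apply expi_per.
  - match goal with |- expi ?A = expi ?B => transitivity (expi (B + 2*PI*IZR n2)) end.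
    + f_equal. apply final_eq2; auto.
    + apply expi_per.
Qed.
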